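(* Let $\Gamma=\langle c\rangle\cong C_4$ and let $A$ be the $16$-dimensional Hopf algebra generated by the grouplike $c$ and elements $x,y$ with $\Delta x=x\otimes1+c\otimes x$, $\Delta y=y\otimes1+c\otimes y$, $cx=-xc$, $cy=-yc$, $xy=-yx$, $x^2=y^2=c^2-1$. Let $B$ be the $16$-dimensional Hopf algebra generated by $c$ and $x,y$ with $\Delta x=x\otimes1+c\otimes x$, $\Delta y=y\otimes1+c^3\otimes y$, $cx=-xc$, $cy=-yc$, $xy=-yx$, $x^2=y^2=c^2-1$. Then $G(A^* )\cong G(B^* )\cong C_2$ and $$\mathrm{corad}(A^* )\cong\mathrm{corad}(B^* )\cong k[C_2]\oplus\mathcal M^c(2,k)\oplus\mathcal M^c(2,k).$$
   Context: $k$ algebraically closed of characteristic $0$. $G(\cdot)$ denotes the group of grouplike elements, $\mathrm{corad}$ the coradical, and $\mathcal M^c(2,k)$ the $2\times2$ matrix coalgebra. *)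

(* Defs.v *)
From HB Require Import structures.
From mathcomp Require Import all_boot all_order all_algebra.
Set Implicit Arguments. Unset Strict Implicit. Unset Printing Implicit Defensive.
Import GRing.Theory.
Local Open Scope ring_scope.

Section Coalg.
Variable k : fieldType.
Variable J : finType.

Definition cvec := {ffun J -> k^o}.
Definition ctvec := {ffun (J * J)%type -> k^o}.

Record coalg := Coalg { cdelta : J -> ctvec ; ceps : J -> k }.

Definition bvec (j : J) : cvec := [ffun i => (i == j)%:R].
Definition tens (u v : cvec) : ctvec := [ffun p => u p.1 * v p.2].

Definition cDelta (C : coalg) (v : cvec) : ctvec := \sum_j v j *: cdelta C j.
Definition cEps (C : coalg) (v : cvec) : k := \sum_j v j * ceps C j.

Definition tensv (S : {vspace cvec}) : {vspace ctvec} :=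
  <<[seq tens u w | u <- vbasis S, w <- vbasis S]>>%VS.

Definition subcoalg (C : coalg) (S : {vspace cvec}) : Prop :=
  forall v, v \in S -> cDelta C v \in tensv S.

Definition simple_subcoalg (C : coalg) (S : {vspace cvec}) : Prop :=
  [/\ S != 0%VS, subcoalg C S &
      forall T, subcoalg C T -> (T <= S)%VS -> T = 0%VS \/ T = S].

(* R is the coradical: the sum of all simple subcoalgebras
   (= least subspace containing every simple subcoalgebra) *)
Definition is_coradical (C : coalg) (R : {vspace cvec}) : Prop :=
  (forall T, simple_subcoalg C T -> (T <= R)%VS) /\
  (forall R', (forall T, simple_subcoalg C T -> (T <= R')%VS) -> (R <= R')%VS).

Definition grouplike (C : coalg) (g : cvec) : Prop :=
  cDelta C g = tens g g /\ cEps C g = 1.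

End Coalg.

Definition coalg_iso_onto (k : fieldType) (J J' : finType) (C : coalg k J)
    (R : {vspace cvec k J}) (D : coalg k J') : Prop :=
  exists fm : J' -> cvec k J,
    [/\ free [seq fm j | j <- enum J'],
        (<<[seq fm j | j <- enum J']>>%VS = R),
        (forall j, cDelta C (fm j)
                   = \sum_(p : (J' * J')%type) cdelta D j p *: tens (fm p.1) (fm p.2)) &
        (forall j, cEps C (fm j) = ceps D j)].

Definition grpC (k : fieldType) (G : finType) : coalg k G :=
  Coalg (fun g => tens (bvec k g) (bvec k g)) (fun _ => 1).

Definition matC (k : fieldType) (n : nat) : coalg k ('I_n * 'I_n)%type :=
  Coalg (fun ij => \sum_(l : 'I_n) tens (bvec k (ij.1, l)) (bvec k (l, ij.2)))
        (fun ij => ((ij.1 == ij.2)%:R : k)).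

Definition sumC_d1 (k : fieldType) (J1 J2 : finType) (C1 : coalg k J1) (j1 : J1)
  (p : ((J1 + J2) * (J1 + J2))%type) : k :=
  match p.1, p.2 with inl a, inl b => cdelta C1 j1 (a, b) | _, _ => 0 end.
Definition sumC_d2 (k : fieldType) (J1 J2 : finType) (C2 : coalg k J2) (j2 : J2)
  (p : ((J1 + J2) * (J1 + J2))%type) : k :=
  match p.1, p.2 with inr a, inr b => cdelta C2 j2 (a, b) | _, _ => 0 end.
Definition sumC (k : fieldType) (J1 J2 : finType) (C1 : coalg k J1) (C2 : coalg k J2)
  : coalg k (J1 + J2)%type :=
  Coalg (fun j => match j with
                  | inl j1 => [ffun p => @sumC_d1 k J1 J2 C1 j1 p]
                  | inr j2 => [ffun p => @sumC_d2 k J1 J2 C2 j2 p]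
                  end)
        (fun j => match j with inl j1 => ceps C1 j1 | inr j2 => ceps C2 j2 end).

Definition targetC (k : fieldType) :=
  sumC (grpC k bool) (sumC (matC k 2) (matC k 2)).

(* basis c^i x^a y^b, i < 4, a b : bool *)
Definition HI := ('I_4 * bool * bool)%type.

Section H.
Variable k : fieldType.

Definition two4 : 'I_4 := inord 2.

(* left multiplication by (c^2 - 1) (c^2 is central) *)
Definition lc2 (v : cvec k HI) : cvec k HI :=
  [ffun p : HI => v (p.1.1 - two4, p.1.2, p.2)] - v.

(* product of basis elements, from cx=-xc, cy=-yc, xy=-yx, x^2=y^2=c^2-1, c^4=1:
   (c^i x^a y^b)(c^j x^a' y^b') = (-1)^((a+b)j + b a') (c^2-1)^(a a' + b b')
                                    c^(i+j) x^(a xor a') y^(b xor b') *)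
Definition bmul (p q : HI) : cvec k HI :=
  let: (i, a, b) := p in let: (j, a', b') := q in
  ((-1) ^+ ((a + b) * j + b * a')%N) *:
    iter ((a && a') + (b && b'))%N lc2 (bvec k (i + j, addb a a', addb b b')).

Definition tmul (U W : ctvec k HI) : ctvec k HI :=
  \sum_(p : (HI * HI)%type) \sum_(q : (HI * HI)%type)
     (U p * W q) *: tens (bmul p.1 q.1) (bmul p.2 q.2).

Definition hone : cvec k HI := bvec k (ord0, false, false).
Definition hcpow (i : 'I_4) : cvec k HI := bvec k (i, false, false).
Definition hx : cvec k HI := bvec k (ord0, true, false).
Definition hy : cvec k HI := bvec k (ord0, false, true).

(* comultiplication of the basis element c^i x^a y^b, as the product
   Delta(c)^i Delta(x)^a Delta(y)^b with Delta c = c(x)c, Delta x = x(x)1 + c(x)x,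
   Delta y = y(x)1 + c^e(x)y *)
Definition deltaH (e : 'I_4) (p : HI) : ctvec k HI :=
  let: (i, a, b) := p in
  tmul (tmul (iter i (tmul (tens (hcpow 1) (hcpow 1))) (tens hone hone))
             (if a then tens hx hone + tens (hcpow 1) hx else tens hone hone))
       (if b then tens hy hone + tens (hcpow e) hy else tens hone hone).

(* the dual coalgebra H^* in the dual basis: Delta of the dual basis vector i at (j,l) = coefficient of e_i in
   e_j e_l; eps(f) = f(1) *)
Definition dualC : coalg k HI :=
  Coalg (fun i => [ffun p : (HI * HI)%type => bmul p.1 p.2 i])
        (fun i => (i == (ord0, false, false))%:R).

Definition dualmul (e : 'I_4) (f g : cvec k HI) : cvec k HI :=
  [ffun i => \sum_(p : (HI * HI)%type) deltaH e i p * f p.1 * g p.2].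

End H.

(* Main.v *)
Require Import Defs.
From HB Require Import structures.
From mathcomp Require Import all_boot all_order all_algebra.
From mathcomp Require Import ring.
Set Implicit Arguments. Unset Strict Implicit. Unset Printing Implicit Defensive.
Import GRing.Theory.
Local Open Scope ring_scope.

Definition ord4 (n : nat) : 'I_4 := Ordinal (ltn_pmod n (isT : (0 < 4)%N)).
Definition ord2 (n : nat) : 'I_2 := Ordinal (ltn_pmod n (isT : (0 < 2)%N)).
Lemma ord4E (i : 'I_4) : i = ord4 i.
Proof. by apply: val_inj; rewrite /= modn_small. Qed.
Lemma ord2E (i : 'I_2) : i = ord2 i.
Proof. by apply: val_inj; rewrite /= modn_small. Qed.
Lemma addI4 (i j : 'I_4) : i + j = ord4 (i + j)%N.
Proof. by apply: val_inj. Qed.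
Lemma subtwo (i : 'I_4) : i - two4 = ord4 (i + 2)%N.
Proof. by apply: val_inj => /=; rewrite /two4 inordK. Qed.

Definition allHI : seq HI :=
  [seq (ia.1, ia.2, b) | ia <- [seq (i, a) | i <- map ord4 (iota 0 4), a <- [:: false; true]],
                         b <- [:: false; true]].
Lemma allHI_uniq : uniq allHI. Proof. by vm_compute. Qed.
Lemma mem_allHI (h : HI) : h \in allHI.
Proof.
case: h => [[i a] b]; rewrite (ord4E i).
by case: i => [[|[|[|[|n]]]] Hi] //=; case: a; case: b; vm_compute.
Qed.

Lemma sum_list (T : finType) (s : seq T) (R : nmodType) (F : T -> R) :
  uniq s -> (forall x, x \in s) -> \sum_(i : T) F i = \sum_(i <- s) F i.
Proof.
move=> us ms; apply: perm_big; apply: uniq_perm => //; first exact: index_enum_uniq.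
by move=> x; rewrite mem_index_enum ms.
Qed.

Lemma sum_allHI (R : nmodType) (F : HI -> R) : \sum_(i : HI) F i = \sum_(i <- allHI) F i.
Proof. exact: sum_list allHI_uniq mem_allHI. Qed.

Notation JT := (bool + (('I_2 * 'I_2) + ('I_2 * 'I_2)))%type.
Definition allI2 : seq ('I_2 * 'I_2) :=
  [seq (ord2 m, ord2 n) | m <- iota 0 2, n <- iota 0 2].
Definition allJT : seq JT :=
  [seq inl b | b <- [:: false; true]] ++ [seq inr (inl p) | p <- allI2]
  ++ [seq inr (inr p) | p <- allI2].
Lemma allJT_uniq : uniq allJT. Proof. by vm_compute. Qed.
Lemma mem_allI2 (p : 'I_2 * 'I_2) : p \in allI2.
Proof.
case: p => m n; rewrite (ord2E m) (ord2E n).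
by case: m => [[|[|?]] ?] //; case: n => [[|[|?]] ?].
Qed.
Lemma mem_allJT (j : JT) : j \in allJT.
Proof.
rewrite !mem_cat; case: j => [b|[p|p]].
- by case: b.
- by rewrite (map_f _ (mem_allI2 p)) orbT.
- by rewrite (map_f _ (mem_allI2 p)) !orbT.
Qed.
Lemma sum_allJT (R : nmodType) (F : JT -> R) : \sum_(i : JT) F i = \sum_(i <- allJT) F i.
Proof. exact: sum_list allJT_uniq mem_allJT. Qed.
Lemma sum_allI2 (R : nmodType) (F : 'I_2 * 'I_2 -> R) :
  \sum_(i : 'I_2 * 'I_2) F i = \sum_(i <- allI2) F i.
Proof. by apply: sum_list mem_allI2; vm_compute. Qed.

Definition GI := (int * int)%type.
Definition gadd (x y : GI) : GI := (x.1 + y.1, x.2 + y.2).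
Definition gmul (x y : GI) : GI := (x.1 * y.1 - x.2 * y.2, x.1 * y.2 + x.2 * y.1).
Definition gZ (n : int) : GI := (n, 0).
Definition g0 : GI := (0, 0).
Definition gsum {T} (s : seq T) (F : T -> GI) : GI := foldr (fun x acc => gadd (F x) acc) g0 s.
Definition zsum {T} (s : seq T) (F : T -> int) : int := foldr (fun x acc => F x + acc) 0 s.
Arguments gsum {T} s F : simpl never.
Arguments zsum {T} s F : simpl never.

Definition lc2F (f : HI -> int) (p : HI) : int := f (ord4 (p.1.1 + 2), p.1.2, p.2) - f p.
Definition bvF (t i : HI) : int := (i == t)%:R.
Definition bmulF (p q : HI) : HI -> int :=
  let: (i, a, b) := p in let: (j, a', b') := q in
  fun r => (-1) ^+ ((a + b) * j + b * a')%N *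
    iter ((a && a') + (b && b'))%N lc2F (bvF (ord4 (i + j), addb a a', addb b b')) r.

Arguments bmulF : simpl never.

Section Field.
Variable k : fieldType.

Lemma bvecE (t i : HI) : bvec k t i = (bvF t i)%:~R.
Proof. by rewrite ffunE /bvF; case: (i == t). Qed.

Lemma iter_lc2E n (v : cvec k HI) (f : HI -> int) :
  (forall r, v r = (f r)%:~R) -> forall r, iter n (@lc2 k) v r = (iter n lc2F f r)%:~R.
Proof.
move=> hv; elim: n => [|n IH] r //=.
rewrite /lc2 /lc2F !ffunE /= !IH subtwo.
by rewrite rmorphB.
Qed.

Lemma bmulE (p q r : HI) : bmul k p q r = (bmulF p q r)%:~R.
Proof.
case: p => [[i a] b]; case: q => [[j a'] b']; rewrite /bmul /bmulF ffunE.
rewrite (iter_lc2E _ (f := bvF (ord4 (i + j), addb a a', addb b b'))).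
  by rewrite rmorphM /= intr_sign.
by move=> r'; rewrite addI4 bvecE.
Qed.

End Field.
Definition fmT_g (s : bool) : seq GI := if s then [:: (1, 0); (0, 0); (0, 0); (0, 0); (-1, 0); (0, 0); (0, 0); (0, 0); (1, 0); (0, 0); (0, 0); (0, 0); (-1, 0); (0, 0); (0, 0); (0, 0)] else [:: (1, 0); (0, 0); (0, 0); (0, 0); (1, 0); (0, 0); (0, 0); (0, 0); (1, 0); (0, 0); (0, 0); (0, 0); (1, 0); (0, 0); (0, 0); (0, 0)].
Definition fmT_p : seq (seq GI) := [:: [:: (1, 0); (0, 0); (0, 0); (0, 2); (0, 1); (0, 0); (0, 0); (-2, 0); (-1, 0); (0, 0); (0, 0); (0, -2); (0, -1); (0, 0); (0, 0); (2, 0)]; [:: (0, 0); (0, 1); (1, 0); (0, 0); (0, 0); (-1, 0); (0, 1); (0, 0); (0, 0); (0, -1); (-1, 0); (0, 0); (0, 0); (1, 0); (0, -1); (0, 0)]; [:: (0, 0); (0, 2); (-2, 0); (0, 0); (0, 0); (2, 0); (0, 2); (0, 0); (0, 0); (0, -2); (2, 0); (0, 0); (0, 0); (-2, 0); (0, -2); (0, 0)]; [:: (1, 0); (0, 0); (0, 0); (0, -2); (0, -1); (0, 0); (0, 0); (-2, 0); (-1, 0); (0, 0); (0, 0); (0, 2); (0, 1); (0, 0); (0, 0); (2, 0)]].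
Definition fmT_m : seq (seq GI) := [:: [:: (1, 0); (0, 0); (0, 0); (0, -2); (0, 1); (0, 0); (0, 0); (2, 0); (-1, 0); (0, 0); (0, 0); (0, 2); (0, -1); (0, 0); (0, 0); (-2, 0)]; [:: (0, 0); (0, -1); (1, 0); (0, 0); (0, 0); (1, 0); (0, 1); (0, 0); (0, 0); (0, 1); (-1, 0); (0, 0); (0, 0); (-1, 0); (0, -1); (0, 0)]; [:: (0, 0); (0, -2); (-2, 0); (0, 0); (0, 0); (-2, 0); (0, 2); (0, 0); (0, 0); (0, 2); (2, 0); (0, 0); (0, 0); (2, 0); (0, -2); (0, 0)]; [:: (1, 0); (0, 0); (0, 0); (0, 2); (0, -1); (0, 0); (0, 0); (2, 0); (-1, 0); (0, 0); (0, 0); (0, -2); (0, 1); (0, 0); (0, 0); (-2, 0)]].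
Definition dT_g (s : bool) : seq GI := if s then [:: (2, 0); (0, 0); (0, 0); (0, 0); (-2, 0); (0, 0); (0, 0); (0, 0); (2, 0); (0, 0); (0, 0); (0, 0); (-2, 0); (0, 0); (0, 0); (0, 0)] else [:: (2, 0); (0, 0); (0, 0); (0, 0); (2, 0); (0, 0); (0, 0); (0, 0); (2, 0); (0, 0); (0, 0); (0, 0); (2, 0); (0, 0); (0, 0); (0, 0)].
Definition dT_p : seq (seq GI) := [:: [:: (1, 0); (0, 0); (0, 0); (0, 0); (0, -1); (0, 0); (0, 0); (0, 0); (-1, 0); (0, 0); (0, 0); (0, 1); (0, 1); (0, 0); (0, 0); (1, 0)]; [:: (0, 0); (0, 0); (0, 0); (0, 0); (0, 0); (0, 0); (0, 0); (0, 0); (0, 0); (0, 2); (-2, 0); (0, 0); (0, 0); (2, 0); (0, 2); (0, 0)]; [:: (0, 0); (0, 0); (0, 0); (0, 0); (0, 0); (0, 0); (0, 0); (0, 0); (0, 0); (0, 1); (1, 0); (0, 0); (0, 0); (-1, 0); (0, 1); (0, 0)]; [:: (1, 0); (0, 0); (0, 0); (0, 0); (0, 1); (0, 0); (0, 0); (0, 0); (-1, 0); (0, 0); (0, 0); (0, -1); (0, -1); (0, 0); (0, 0); (1, 0)]].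
Definition dT_m : seq (seq GI) := [:: [:: (1, 0); (0, 0); (0, 0); (0, 0); (0, -1); (0, 0); (0, 0); (0, 0); (-1, 0); (0, 0); (0, 0); (0, -1); (0, 1); (0, 0); (0, 0); (-1, 0)]; [:: (0, 0); (0, 0); (0, 0); (0, 0); (0, 0); (0, 0); (0, 0); (0, 0); (0, 0); (0, -2); (-2, 0); (0, 0); (0, 0); (-2, 0); (0, 2); (0, 0)]; [:: (0, 0); (0, 0); (0, 0); (0, 0); (0, 0); (0, 0); (0, 0); (0, 0); (0, 0); (0, -1); (1, 0); (0, 0); (0, 0); (1, 0); (0, 1); (0, 0)]; [:: (1, 0); (0, 0); (0, 0); (0, 0); (0, 1); (0, 0); (0, 0); (0, 0); (-1, 0); (0, 0); (0, 0); (0, 1); (0, -1); (0, 0); (0, 0); (-1, 0)]].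
Definition JvT : seq (seq int) := [:: [:: 0; 0; 1; 0; 0; 0; 0; 0; 0; 0; 1; 0; 0; 0; 0; 0]; [:: 0; 0; 0; 0; 0; 0; 1; 0; 0; 0; 0; 0; 0; 0; 1; 0]; [:: 0; 1; 0; 0; 0; 0; 0; 0; 0; 1; 0; 0; 0; 0; 0; 0]; [:: 0; 0; 0; 0; 0; 1; 0; 0; 0; 0; 0; 0; 0; 1; 0; 0]; [:: 0; 0; 0; 1; 0; 0; 0; 0; 0; 0; 0; 1; 0; 0; 0; 0]; [:: 0; 0; 0; 0; 0; 0; 0; 1; 0; 0; 0; 0; 0; 0; 0; 1]].
Definition KT : seq (seq int) := [:: [:: 0; 0; 1; 0; 0; 0; 0; 0; 0; 0; 0; 0; 0; 0; 0; 0]; [:: 0; 0; 0; 0; 0; 0; 1; 0; 0; 0; 0; 0; 0; 0; 0; 0]; [:: 0; 1; 0; 0; 0; 0; 0; 0; 0; 0; 0; 0; 0; 0; 0; 0]; [:: 0; 0; 0; 0; 0; 1; 0; 0; 0; 0; 0; 0; 0; 0; 0; 0]; [:: 0; 0; 0; 1; 0; 0; 0; 0; 0; 0; 0; 0; 0; 0; 0; 0]; [:: 0; 0; 0; 0; 0; 0; 0; 1; 0; 0; 0; 0; 0; 0; 0; 0]].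
Definition hidx (h : HI) : nat := (4 * h.1.1 + 2 * h.1.2 + h.2)%N.
Definition fmT (j : JT) : seq GI :=
  match j with inl s => fmT_g s
  | inr (inl (m, n)) => nth [::] fmT_p (2 * m + n)
  | inr (inr (m, n)) => nth [::] fmT_m (2 * m + n) end.
Definition dT (j : JT) : seq GI :=
  match j with inl s => dT_g s
  | inr (inl (m, n)) => nth [::] dT_p (2 * m + n)
  | inr (inr (m, n)) => nth [::] dT_m (2 * m + n) end.
Definition fmZ (j : JT) (h : HI) : GI := nth g0 (fmT j) (hidx h).
Definition dZ (j : JT) (h : HI) : GI := nth g0 (dT j) (hidx h).
Definition Jv (r : nat) (h : HI) : int := nth 0 (nth [::] JvT r) (hidx h).
Definition KZ (r : nat) (h : HI) : int := nth 0 (nth [::] KT r) (hidx h).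
Definition oneHI : HI := (ord0, false, false).
Definition inlp (p : 'I_2 * 'I_2) : JT := inr (inl p).
Definition inrp (p : 'I_2 * 'I_2) : JT := inr (inr p).

Definition CKgl := all (fun s => all (fun p => all (fun q =>
  gsum allHI (fun i => gmul (fmZ (inl s) i) (gZ (bmulF p q i))) ==
  gmul (fmZ (inl s) p) (fmZ (inl s) q)) allHI) allHI) [:: false; true].
Lemma CKgl_ok : CKgl. Proof. by vm_compute. Qed.

Definition sgf (b : bool) : 'I_2 * 'I_2 -> JT := if b then inrp else inlp.
Definition CKmat := all (fun b => let sg := sgf b in all (fun m => all (fun n => all (fun p => all (fun q =>
  gsum allHI (fun i => gmul (fmZ (sg (m, n)) i) (gZ (bmulF p q i))) ==
  gadd (gmul (fmZ (sg (m, ord2 0)) p) (fmZ (sg (ord2 0, n)) q))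
       (gmul (fmZ (sg (m, ord2 1)) p) (fmZ (sg (ord2 1, n)) q))) allHI) allHI)
  (map ord2 (iota 0 2))) (map ord2 (iota 0 2))) [:: false; true].
Lemma CKmat_ok : CKmat. Proof. by vm_compute. Qed.

Definition CKdual := all (fun a => all (fun b =>
  gsum allHI (fun i => gmul (fmZ a i) (dZ b i)) == if a == b then gZ 8 else g0) allJT) allJT.
Lemma CKdual_ok : CKdual. Proof. by vm_compute. Qed.

Definition CKinv := all (fun i => all (fun i' =>
  gadd (gsum allJT (fun a => gmul (dZ a i') (fmZ a i)))
       (gZ (8 * zsum (iota 0 6) (fun r => Jv r i' * KZ r i))) == gZ (8 * bvF i' i)) allHI) allHI.
Lemma CKinv_ok : CKinv. Proof. by vm_compute. Qed.

Definition o011 : HI := (ord4 0, true, true).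
Definition o111 : HI := (ord4 1, true, true).
Definition hmulF (u w : HI -> int) (i : HI) : int :=
  zsum allHI (fun p => zsum allHI (fun q => u p * w q * bmulF p q i)).
Definition CKJ := all (fun r => all (fun r' => all (fun i =>
  hmulF (Jv r') (Jv r) i == (if (4 <= r)%N then 0 else
     hmulF (Jv r') (Jv r) o011 * Jv 4 i + hmulF (Jv r') (Jv r) o111 * Jv 5 i))
  allHI) (iota 0 6)) (iota 0 6).
Lemma CKJ_ok : CKJ. Proof. by vm_compute. Qed.
Definition CKone := all (fun q => all (fun i => bmulF oneHI q i == bvF q i) allHI) allHI.
Lemma CKone_ok : CKone. Proof. by vm_compute. Qed.

Definition tdZ (j : JT) (P : JT * JT) : int :=
  match j, P.1, P.2 with
  | inl s, inl a, inl b => ((a == s) && (b == s))%:R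
  | inr (inl mn), inr (inl a), inr (inl b) => ((a.1 == mn.1) && (a.2 == b.1) && (b.2 == mn.2))%:R
  | inr (inr mn), inr (inr a), inr (inr b) => ((a.1 == mn.1) && (a.2 == b.1) && (b.2 == mn.2))%:R
  | _, _, _ => 0
  end.
Definition CKiso := all (fun j => all (fun p => all (fun q =>
  gsum allHI (fun i => gmul (fmZ j i) (gZ (bmulF p q i))) ==
  gsum allJT (fun a => gsum allJT (fun b => gmul (gZ (tdZ j (a, b))) (gmul (fmZ a p) (fmZ b q)))))
  allHI) allHI) allJT.
Lemma CKiso_ok : CKiso. Proof. by vm_compute. Qed.

Lemma mem_bool2 (s : bool) : s \in [:: false; true]. Proof. by case: s. Qed.
Lemma mem_ord2 (m : 'I_2) : m \in map ord2 (iota 0 2).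
Proof. by rewrite (ord2E m); case: m => [[|[|?]] ?]. Qed.

Section Main.
Variables (k : fieldType) (io : k).
Hypothesis hio : io ^+ 2 = -1.

Definition gI (x : GI) : k := x.1%:~R + x.2%:~R * io.
Lemma gI_add x y : gI (gadd x y) = gI x + gI y.
Proof. rewrite /gI /= !rmorphD /=. ring. Qed.
Lemma gI_mul x y : gI (gmul x y) = gI x * gI y.
Proof.
rewrite /gI /= !(rmorphD, rmorphN, rmorphM) /=.
transitivity ((x.1%:~R * y.1%:~R + x.2%:~R * y.2%:~R * (- 1)) +
   (x.1%:~R * y.2%:~R + x.2%:~R * y.1%:~R) * io : k); first by ring.
rewrite -hio; ring.
Qed.
Lemma gI_Z n : gI (gZ n) = n%:~R.
Proof. by rewrite /gI /= mul0r addr0. Qed.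
Lemma gI_0 : gI g0 = 0.
Proof. by rewrite /gI /= mul0r addr0. Qed.
Lemma gI_sumL (T : Type) (s : seq T) (F : T -> GI) :
  \sum_(i <- s) gI (F i) = gI (gsum s F).
Proof. elim: s => [|x s IH]; by rewrite ?big_nil ?gI_0 // big_cons IH gI_add. Qed.
Lemma gI_sumHI (F : HI -> GI) : \sum_(i : HI) gI (F i) = gI (gsum allHI F).
Proof. by rewrite sum_allHI gI_sumL. Qed.
Lemma gI_sumJT (F : JT -> GI) : \sum_(i : JT) gI (F i) = gI (gsum allJT F).
Proof. by rewrite sum_allJT gI_sumL. Qed.
Lemma zsumE (T : Type) (s : seq T) (F : T -> int) :
  (zsum s F)%:~R = \sum_(i <- s) (F i)%:~R :> k.
Proof. elim: s => [|x s IH]; by rewrite ?big_nil // big_cons -IH rmorphD. Qed.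

Definition fm (j : JT) : cvec k HI := [ffun h => gI (fmZ j h)].
Definition dv (j : JT) : cvec k HI := [ffun h => gI (dZ j h)].
Definition jv (r : nat) : cvec k HI := [ffun h => (Jv r h)%:~R].
Definition ev (f v : cvec k HI) : k := \sum_i f i * v i.

Lemma cDeltaE (f : cvec k HI) p q :
  cDelta (dualC k) f (p, q) = \sum_i f i * (bmulF p q i)%:~R.
Proof.
rewrite /cDelta sum_ffunE; apply: eq_bigr => i _.
by rewrite !ffunE /= bmulE.
Qed.
Lemma cEpsE (f : cvec k HI) : cEps (dualC k) f = f oneHI.
Proof.
rewrite /cEps (bigD1 oneHI) //= big1 ?addr0 ?eqxx ?mulr1 //.
by move=> i /negbTE ->; rewrite mulr0.
Qed.

Lemma cDelta_fm_sum j p q : cDelta (dualC k) (fm j) (p, q) =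
  gI (gsum allHI (fun i => gmul (fmZ j i) (gZ (bmulF p q i)))).
Proof.
rewrite cDeltaE -gI_sumHI; apply: eq_bigr => i _.
by rewrite ffunE gI_mul gI_Z.
Qed.

Lemma fm_grouplike s : cDelta (dualC k) (fm (inl s)) = tens (fm (inl s)) (fm (inl s)).
Proof.
apply/ffunP => -[p q]; rewrite cDelta_fm_sum ffunE.
have := CKgl_ok; rewrite /CKgl => /allP/(_ s (mem_bool2 s))/allP/(_ p (mem_allHI p)).
by move=> /allP/(_ q (mem_allHI q))/eqP ->; rewrite gI_mul !ffunE.
Qed.

Lemma fm_matrix (b : bool) m n : let sg := sgf b in
  cDelta (dualC k) (fm (sg (m, n))) =
  \sum_(r : 'I_2) tens (fm (sg (m, r))) (fm (sg (r, n))).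
Proof.
move=> sg; apply/ffunP => -[p q]; rewrite cDelta_fm_sum sum_ffunE.
rewrite big_ord_recr big_ord_recr big_ord0 !ffunE /= add0r.
have -> : (ord_max : 'I_2) = ord2 1 by apply: val_inj.
have -> : (widen_ord (leqnSn 1) ord_max : 'I_2) = ord2 0 by apply: val_inj.
have := CKmat_ok; rewrite /CKmat => /allP/(_ b (mem_bool2 b))/allP/(_ m (mem_ord2 m)).
move=> /allP/(_ n (mem_ord2 n))/allP/(_ p (mem_allHI p)).
by move=> /allP/(_ q (mem_allHI q))/eqP ->; rewrite gI_add !gI_mul.
Qed.

Lemma ev_fm_dv a b : ev (fm a) (dv b) = if a == b then 8%:R else 0.
Proof.
rewrite /ev.
under eq_bigr do rewrite !ffunE -gI_mul.
rewrite gI_sumHI.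
have := CKdual_ok; rewrite /CKdual => /allP/(_ a (mem_allJT a))/allP/(_ b (mem_allJT b)).
move/eqP ->; case: (a == b); by rewrite ?gI_0 // gI_Z.
Qed.

End Main.

Section Tens.
Variables (k : fieldType) (J : finType).
Implicit Types (S : {vspace cvec k J}) (X : ctvec k J) (u w : cvec k J).
Definition cs (l : J) X : cvec k J := [ffun j => X (j, l)].
Definition rs (j : J) X : cvec k J := [ffun l => X (j, l)].

Lemma cs_sum (I : Type) (r : seq I) (F : I -> ctvec k J) (c : I -> k) l :
  cs l (\sum_(i <- r) c i *: F i) = \sum_(i <- r) c i *: cs l (F i).
Proof. apply/ffunP => j; rewrite !ffunE !sum_ffunE; apply: eq_bigr => i _; by rewrite !ffunE. Qed.
Lemma rs_sum (I : Type) (r : seq I) (F : I -> ctvec k J) (c : I -> k) j :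
  rs j (\sum_(i <- r) c i *: F i) = \sum_(i <- r) c i *: rs j (F i).
Proof. apply/ffunP => l; rewrite !ffunE !sum_ffunE; apply: eq_bigr => i _; by rewrite !ffunE. Qed.
Lemma cs_tens l u w : cs l (tens u w) = w l *: u.
Proof. by apply/ffunP => j; rewrite !ffunE /= mulrC. Qed.
Lemma rs_tens j u w : rs j (tens u w) = u j *: w.
Proof. by apply/ffunP => l; rewrite !ffunE. Qed.

Lemma tens_sumL (I : Type) (r : seq I) (U : I -> cvec k J) (c : I -> k) w :
  tens (\sum_(i <- r) c i *: U i) w = \sum_(i <- r) c i *: tens (U i) w.
Proof.
apply/ffunP => p; rewrite !ffunE !sum_ffunE mulr_suml; apply: eq_bigr => i _.
by rewrite !ffunE /= scalerAl.
Qed.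
Lemma tens_sumR (I : Type) (r : seq I) (U : I -> cvec k J) (c : I -> k) u :
  tens u (\sum_(i <- r) c i *: U i) = \sum_(i <- r) c i *: tens u (U i).
Proof.
apply/ffunP => p; rewrite !ffunE !sum_ffunE mulr_sumr; apply: eq_bigr => i _.
by rewrite !ffunE /= scalerAr.
Qed.

Lemma vdec u : u = \sum_j u j *: bvec k j.
Proof.
apply/ffunP => l; rewrite sum_ffunE (bigD1 l) //= big1 ?addr0.
  by rewrite !ffunE eqxx /=; exact: (esym (mulr1 _)).
by move=> j /negbTE nj; rewrite !ffunE eq_sym nj /=; exact: mulr0.
Qed.

Lemma tensv_slices S X : X \in tensv S -> (forall l, cs l X \in S) /\ (forall j, rs j X \in S).
Proof.
rewrite /tensv => /(@coord_span _ _ _ (in_tuple _)) ->.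
split=> [l|j]; rewrite ?cs_sum ?rs_sum; apply: memv_suml => i _; apply: memvZ;
  (have : (in_tuple [seq tens u w | u <- vbasis S, w <- vbasis S])`_i \in
     [seq tens u w | u <- vbasis S, w <- vbasis S] by apply: mem_nth; exact: ltn_ord);
  move=> /allpairsP [[u w] [/= hu hw ->]];
  rewrite ?cs_tens ?rs_tens; apply: memvZ; exact: vbasis_mem.
Qed.

Lemma tens_mem S u w : u \in S -> w \in S -> tens u w \in tensv S.
Proof.
move=> /coord_vbasis -> /coord_vbasis ->.
rewrite tens_sumL; apply: memv_suml => i _; apply: memvZ.
rewrite tens_sumR; apply: memv_suml => j _; apply: memvZ.
apply: memv_span; apply: allpairs_f; apply: mem_nth; by rewrite size_tuple.
Qed.

Lemma slices_tensv S X : (forall l, cs l X \in S) -> (forall j, rs j X \in S) -> X \in tensv S.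
Proof.
move=> hc hr.
have dec : X = \sum_l tens (cs l X) (bvec k l).
  apply/ffunP => -[j l']; rewrite sum_ffunE (bigD1 l') //= big1 ?addr0.
    by rewrite !ffunE /= eqxx mulr1.
  by move=> l /negbTE nl; rewrite !ffunE /= eq_sym nl mulr0.
pose b := vbasis S.
pose w r := \sum_l coord b r (cs l X) *: bvec k l.
have -> : X = \sum_(r < \dim S) tens b`_r (w r).
  rewrite {1}dec.
  under eq_bigr do rewrite (coord_vbasis (hc _)) tens_sumL.
  rewrite exchange_big; apply: eq_bigr => r _; by rewrite tens_sumR.
apply: memv_suml => r _; apply: tens_mem.
  by apply: vbasis_mem; apply: mem_nth; rewrite size_tuple.
have -> : w r = \sum_j coord b r (bvec k j) *: rs j X.
  apply/ffunP => l'; rewrite !sum_ffunE.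
  transitivity (coord b r (cs l' X)).
    rewrite (bigD1 l') //= big1 ?addr0.
      by rewrite !ffunE eqxx /=; exact: mulr1.
    by move=> l /negbTE nl; rewrite !ffunE eq_sym nl /=; exact: mulr0.
  rewrite {1}(vdec (cs l' X)) linear_sum; apply: eq_bigr => j _.
  by rewrite linearZ !ffunE /= mulrC.
by apply: memv_suml => j _; apply: memvZ.
Qed.

Lemma subcoalgP (C : coalg k J) S :
  subcoalg C S <-> forall v, v \in S -> (forall l, cs l (cDelta C v) \in S) /\ (forall j, rs j (cDelta C v) \in S).
Proof.
split=> h v hv; first exact: tensv_slices (h v hv).
by case: (h v hv) => h1 h2; apply: slices_tensv.
Qed.

Lemma cDeltaZ (C : coalg k J) (a : k) v : cDelta C (a *: v) = a *: cDelta C v.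
Proof.
rewrite /cDelta scaler_sumr; apply: eq_bigr => j _; by rewrite ffunE scalerA.
Qed.
Lemma cDeltaD (C : coalg k J) v w : cDelta C (v + w) = cDelta C v + cDelta C w.
Proof.
rewrite /cDelta -big_split; apply: eq_bigr => j _; by rewrite ffunE scalerDl.
Qed.
Lemma cDelta_sum (C : coalg k J) (I : Type) (r : seq I) (c : I -> k) (F : I -> cvec k J) :
  cDelta C (\sum_(i <- r) c i *: F i) = \sum_(i <- r) c i *: cDelta C (F i).
Proof.
elim: r => [|x r IH]; rewrite ?big_nil ?big_cons.
  by rewrite /cDelta big1 // => j _; rewrite ffunE scale0r.
by rewrite cDeltaD cDeltaZ IH.
Qed.

Lemma subcoalg_span (C : coalg k J) (s : seq (cvec k J)) :
  (forall x, x \in s -> cDelta C x \in tensv <<s>>) -> subcoalg C <<s>>.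
Proof.
move=> h v /(@coord_span _ _ _ (in_tuple _)) ->.
rewrite cDelta_sum; apply: memv_suml => i _; apply: memvZ; apply: h.
by apply: mem_nth; exact: ltn_ord.
Qed.

End Tens.

Lemma span_zero (k : fieldType) (V W : vectType k) (s : seq V) (phi : V -> W) :
  (forall a x y, phi (a *: x + y) = a *: phi x + phi y) ->
  (forall x, x \in s -> phi x = 0) -> forall v, v \in <<s>>%VS -> phi v = 0.
Proof.
move=> hl h0 v /(@coord_span _ _ _ (in_tuple _)) ->.
have p0 : phi 0 = 0.
  by apply: (@addrI _ (phi 0)); rewrite addr0 -{1}(scale1r (phi 0)) -hl addr0 scale1r.
have hs : forall (I : Type) (r : seq I) (c : I -> k) (x : I -> V),
   phi (\sum_(i <- r) c i *: x i) = \sum_(i <- r) c i *: phi (x i).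
  move=> I r c x; elim: r => [|a r IH]; rewrite ?big_nil ?big_cons //.
  by rewrite hl IH.
rewrite hs big1 // => i _; rewrite h0 ?scaler0 //.
by apply: mem_nth; exact: ltn_ord.
Qed.

Section Main2.
Variables (k : fieldType) (io : k).
Hypothesis hio : io ^+ 2 = -1.
Local Notation gI := (gI io).
Local Notation fm := (fm io).
Local Notation dv := (dv io).
Local Notation jv := (@jv k).
Local Notation ev := (@ev k).
Local Notation cD := (cDelta (dualC k)).

Definition Ltr (h f : cvec k HI) : cvec k HI := [ffun i => \sum_l h l * cD f (i, l)].
Definition Rtr (h f : cvec k HI) : cvec k HI := [ffun l => \sum_i h i * cD f (i, l)].

Lemma scaleo (a b : k) : a *: (b : k^o) = a * b. Proof. by []. Qed.
Lemma Ltr_lin h a x y : Ltr h (a *: x + y) = a *: Ltr h x + Ltr h y.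
Proof.
apply/ffunP => i; rewrite !ffunE /= scaleo mulr_sumr -big_split; apply: eq_bigr => l _.
rewrite cDeltaD cDeltaZ !ffunE /= scaleo.
by rewrite mulrDr mulrCA.
Qed.
Lemma Rtr_lin h a x y : Rtr h (a *: x + y) = a *: Rtr h x + Rtr h y.
Proof.
apply/ffunP => i; rewrite !ffunE /= scaleo mulr_sumr -big_split; apply: eq_bigr => l _.
rewrite cDeltaD cDeltaZ !ffunE /= scaleo.
by rewrite mulrDr mulrCA.
Qed.
Lemma ev_lin a x y v : ev (a *: x + y) v = a * ev x v + ev y v.
Proof.
rewrite /ev mulr_sumr -big_split; apply: eq_bigr => i _.
by rewrite !ffunE /= scaleo mulrDl mulrA.
Qed.

Lemma Ltr_mem S h f : subcoalg (dualC k) S -> f \in S -> Ltr h f \in S.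
Proof.
move=> /subcoalgP hS /hS [hc _].
have -> : Ltr h f = \sum_l h l *: cs l (cD f).
  by apply/ffunP => i; rewrite !ffunE sum_ffunE; apply: eq_bigr => l _; rewrite !ffunE.
by apply: memv_suml => l _; apply: memvZ.
Qed.
Lemma Rtr_mem S h f : subcoalg (dualC k) S -> f \in S -> Rtr h f \in S.
Proof.
move=> /subcoalgP hS /hS [_ hr].
have -> : Rtr h f = \sum_j h j *: rs j (cD f).
  by apply/ffunP => i; rewrite !ffunE sum_ffunE; apply: eq_bigr => l _; rewrite !ffunE.
by apply: memv_suml => l _; apply: memvZ.
Qed.

Lemma Ltr_tens h f (I : finType) (U W : I -> cvec k HI) :
  cD f = \sum_r tens (U r) (W r) -> Ltr h f = \sum_r ev (W r) h *: U r.
Proof.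
move=> hf; apply/ffunP => i; rewrite !ffunE sum_ffunE hf.
under eq_bigr do rewrite sum_ffunE mulr_sumr.
rewrite exchange_big; apply: eq_bigr => r _.
rewrite !ffunE /ev scaleo mulr_suml; apply: eq_bigr => l _; rewrite !ffunE /=.
ring.
Qed.
Lemma Rtr_tens h f (I : finType) (U W : I -> cvec k HI) :
  cD f = \sum_r tens (U r) (W r) -> Rtr h f = \sum_r ev (U r) h *: W r.
Proof.
move=> hf; apply/ffunP => l; rewrite !ffunE sum_ffunE hf.
under eq_bigr do rewrite sum_ffunE mulr_sumr.
rewrite exchange_big; apply: eq_bigr => r _.
rewrite !ffunE /ev scaleo mulr_suml; apply: eq_bigr => i _; rewrite !ffunE /=.
ring.
Qed.

End Main2.

Lemma lin_diff (k : fieldType) (V W : vectType k) (A B : V -> W) :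
  (forall a x y, A (a *: x + y) = a *: A x + A y) ->
  (forall a x y, B (a *: x + y) = a *: B x + B y) ->
  forall a x y, (A (a *: x + y) - B (a *: x + y)) = a *: (A x - B x) + (A y - B y).
Proof. by move=> hA hB a x y; rewrite hA hB scalerBr opprD addrACA. Qed.

Section Main3.
Variables (k : fieldType) (io : k).
Local Notation ev := (@ev k).
Local Notation cD := (cDelta (dualC k)).
Local Notation Ltr := (@Ltr k).
Local Notation Rtr := (@Rtr k).

Lemma cD0 : cD 0 = 0.
Proof. by rewrite -(scale0r 0) cDeltaZ scale0r. Qed.
Lemma Ltr0 h : Ltr h 0 = 0.
Proof. by apply/ffunP => i; rewrite !ffunE cD0 big1 // => l _; rewrite ffunE mulr0. Qed.
Lemma Rtr0 h : Rtr h 0 = 0.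
Proof. by apply/ffunP => i; rewrite !ffunE cD0 big1 // => l _; rewrite ffunE mulr0. Qed.
Lemma RtrZ h a x : Rtr h (a *: x) = a *: Rtr h x.
Proof. by rewrite -[a *: x]addr0 Rtr_lin Rtr0 addr0. Qed.

Lemma delta_sum1 (G : 'I_2 -> cvec k HI) (c : k) (n q0 w : 'I_2) :
  \sum_(r : 'I_2) (if (r, n) == (q0, w) then c else 0) *: G r = if n == w then c *: G q0 else 0.
Proof.
rewrite (bigD1 q0) //= big1 ?addr0.
  by rewrite xpair_eqE eqxx /=; case: (n == w); rewrite ?scale0r.
by move=> r /negbTE hr; rewrite xpair_eqE hr /= scale0r.
Qed.
Lemma delta_sum2 (G : 'I_2 -> cvec k HI) (c : k) (m u p0 : 'I_2) :
  \sum_(s : 'I_2) (if (m, s) == (u, p0) then c else 0) *: G s = if m == u then c *: G p0 else 0.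
Proof.
rewrite (bigD1 p0) //= big1 ?addr0.
  by rewrite xpair_eqE eqxx andbT; case: (m == u); rewrite ?scale0r.
by move=> r /negbTE hr; rewrite xpair_eqE hr andbF scale0r.
Qed.

Lemma mat_simple (F D : 'I_2 * 'I_2 -> cvec k HI) (h8 : (8%:R : k) != 0) :
  (forall m n, cD (F (m, n)) = \sum_(r : 'I_2) tens (F (m, r)) (F (r, n))) ->
  (forall a b, ev (F a) (D b) = if a == b then 8%:R else 0) ->
  simple_subcoalg (dualC k) <<[seq F ij | ij <- allI2]>>.
Proof.
move=> hF hD; set S := <<_>>%VS.
have FS : forall ij, F ij \in S.
  by move=> ij; apply: memv_span; apply: map_f; exact: mem_allI2.
have hSC : subcoalg (dualC k) S.
  apply: subcoalg_span => x /mapP [[m n] _ ->]; rewrite hF.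
  by apply: memv_suml => r _; apply: tens_mem.
split => //.
  apply/eqP => S0; have := FS (ord0, ord0); rewrite S0 memv0 => /eqP F0.
  have := hD (ord0, ord0) (ord0, ord0); rewrite F0 eqxx /ev big1 => [h|i _]; last by rewrite ffunE mul0r.
  by move: h8; rewrite -h eqxx.
move=> T hT hTS.
have [->|Tn0] := eqVneq T 0%VS; [by left | right].
apply/eqP; rewrite eqEsubv hTS /=; apply/span_subvP => x /mapP [[p0 q0] _ ->].
set f := vpick T.
have hfT : f \in T := memv_pick T.
have hf0 : f != 0 by rewrite vpick0.
have hfS : f \in S := subvP hTS _ hfT.
have claim1 : forall g, g \in S -> g - 8%:R^-1 *: \sum_uw ev g (D uw) *: F uw = 0.
  apply: span_zero.
    apply: lin_diff => // a x' y'.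
    rewrite scalerA mulrC -scalerA -scalerDr; congr (_ *: _).
    rewrite scaler_sumr -big_split; apply: eq_bigr => uw _.
    by rewrite ev_lin scalerDl scalerA.
  move=> x' /mapP [mn _ ->]; rewrite (bigD1 mn) //= big1 ?addr0.
    by rewrite hD eqxx scalerA mulVf // scale1r subrr.
  by move=> uw /negbTE huw; rewrite hD eq_sym huw scale0r.
have [[u w] huw] : exists uw, ev f (D uw) != 0.
  case: (boolP [exists uw, ev f (D uw) != 0]) => [/existsP //|/existsPn h].
  move: hf0; have := claim1 f hfS; rewrite big1 ?scaler0 ?subr0 => [->|uw _]; first by rewrite eqxx.
  by have := h uw; rewrite negbK => /eqP ->; rewrite scale0r.
have claim3 : forall g, g \in S ->
    Rtr (D (u, p0)) (Ltr (D (q0, w)) g) - (8%:R * ev g (D (u, w))) *: F (p0, q0) = 0.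
  apply: span_zero.
    apply: lin_diff => a x' y'; first by rewrite Ltr_lin Rtr_lin.
    by rewrite ev_lin mulrDr scalerDl mulrCA scalerA.
  move=> x' /mapP [[m n] _ ->].
  rewrite (Ltr_tens _ (hF m n)).
  under eq_bigr do rewrite hD.
  rewrite delta_sum1 hD.
  case: (n =P w) => [->|nw]; last first.
    rewrite Rtr0 xpair_eqE; case: (m == u) => /=.
      by move/eqP: nw => /negbTE ->; rewrite mulr0 scale0r subr0.
    by rewrite mulr0 scale0r subr0.
  rewrite RtrZ (Rtr_tens _ (hF m q0)).
  under eq_bigr do rewrite hD.
  rewrite delta_sum2 xpair_eqE eqxx andbT.
  case: (m == u); rewrite ?scalerA ?subrr //.
  by rewrite mulr0 !scaler0 scale0r subr0.
have := claim3 f hfS; move/eqP; rewrite subr_eq0 => /eqP hR.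
have hc : (8%:R * ev f (D (u, w))) != 0 by rewrite mulf_neq0.
have -> : F (p0, q0) = (8%:R * ev f (D (u, w)))^-1 *: Rtr (D (u, p0)) (Ltr (D (q0, w)) f).
  by rewrite hR scalerA mulVf // scale1r.
by apply: memvZ; apply: Rtr_mem => //; apply: Ltr_mem.
Qed.

End Main3.

Section Main4.
Variables (k : fieldType) (io : k).
Hypothesis hio : io ^+ 2 = -1.
Hypothesis h8 : (8%:R : k) != 0.
Local Notation gI := (gI io).
Local Notation fm := (fm io).
Local Notation dv := (dv io).
Local Notation jv := (@jv k).
Local Notation ev := (@ev k).
Local Notation cD := (cDelta (dualC k)).
Local Notation Ltr := (@Ltr k).

Lemma line_simple (g : cvec k HI) : g != 0 -> cD g = tens g g ->
  simple_subcoalg (dualC k) <[g]>%VS.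
Proof.
move=> g0 hg; split.
- apply/eqP => h; have := memv_line g; rewrite h memv0 => /eqP h'.
  by move: g0; rewrite h' eqxx.
- rewrite -span_seq1; apply: subcoalg_span => x; rewrite inE => /eqP ->.
  by rewrite hg span_seq1; apply: tens_mem; exact: memv_line.
- move=> T _ hTS; have := dimvS hTS; rewrite dim_vline g0 => hd.
  have [d0|dn0] := eqVneq (\dim T) 0%N.
    by left; apply/eqP; rewrite -dimv_eq0 d0.
  right; apply/eqP; rewrite eqEdim hTS dim_vline g0 /=.
  by rewrite lt0n.
Qed.

Definition Rsp : {vspace cvec k HI} := <<[seq fm j | j <- enum (JT : finType)]>>%VS.
Lemma fm_in_R j : fm j \in Rsp.
Proof. by apply: memv_span; apply: map_f; rewrite mem_enum. Qed.

Lemma inv_id (i i' : HI) :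
  \sum_a dv a i' * fm a i + (8 * zsum (iota 0 6) (fun r => Jv r i' * KZ r i))%:~R
  = (8 * bvF i' i)%:~R.
Proof.
have := CKinv_ok; rewrite /CKinv => /allP/(_ i (mem_allHI i))/allP/(_ i' (mem_allHI i'))/eqP.
move=> /(congr1 gI); rewrite gI_add gI_Z -gI_sumJT gI_Z => <-.
by congr (_ + _); apply: eq_bigr => a _; rewrite !ffunE gI_mul.
Qed.

Lemma R_of_J (g : cvec k HI) : (forall r, (r < 6)%N -> ev g (jv r) = 0) -> g \in Rsp.
Proof.
move=> hJ.
have h8g : forall i, 8%:R * g i = \sum_a ev g (dv a) * fm a i.
  move=> i.
  have -> : 8%:R * g i = \sum_i' g i' * (8 * bvF i' i)%:~R.
    rewrite (bigD1 i) //= big1 ?addr0.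
      by rewrite /bvF eqxx /= mulr1 mulrC.
    move=> i' /negbTE hi; rewrite (_ : bvF i' i = 0); first by rewrite mulr0.
    by rewrite /bvF eq_sym hi.
  under eq_bigr do rewrite -inv_id mulrDr.
  rewrite big_split /=.
  rewrite [X in _ + X](_ : _ = 0) ?addr0.
    rewrite /ev; under eq_bigr do rewrite mulr_sumr.
    rewrite exchange_big; apply: eq_bigr => a _; rewrite mulr_suml.
    by apply: eq_bigr => i' _; rewrite !ffunE mulrA.
  under eq_bigr do rewrite rmorphM /= zsumE mulrCA mulr_sumr.
  rewrite -mulr_sumr exchange_big big1_seq ?mulr0 // => r /= hr0.
  have : r \in iota 0 6 by []. rewrite mem_iota => /andP [_ hr].
  have hz := hJ r hr.
  transitivity (ev g (jv r) * (KZ r i)%:~R); last by rewrite hz mul0r.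
  rewrite /ev mulr_suml; apply: eq_bigr => i' _.
  by rewrite rmorphM ffunE mulrA.
have -> : g = 8%:R^-1 *: \sum_a ev g (dv a) *: fm a.
  apply/ffunP => i; rewrite ffunE sum_ffunE /= scaleo.
  under eq_bigr do rewrite ffunE /= scaleo.
  by rewrite -h8g mulrA mulVf // mul1r.
apply: memvZ; apply: memv_suml => a _; apply: memvZ; exact: fm_in_R.
Qed.

End Main4.

Section Main5.
Variables (k : fieldType) (io : k).
Hypothesis hio : io ^+ 2 = -1.
Hypothesis h8 : (8%:R : k) != 0.
Local Notation gI := (gI io).
Local Notation fm := (fm io).
Local Notation dv := (dv io).
Local Notation jv := (@jv k).
Local Notation ev := (@ev k).
Local Notation cD := (cDelta (dualC k)).
Local Notation Ltr := (@Ltr k).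
Local Notation Rsp := (Rsp io).

Lemma Ltr_one h f : (Ltr h f) oneHI = ev f h.
Proof.
rewrite ffunE /ev; apply: eq_bigr => l _; rewrite cDeltaE.
rewrite (bigD1 l) //= big1 ?addr0.
  have := CKone_ok; rewrite /CKone => /allP/(_ l (mem_allHI l))/allP/(_ l (mem_allHI l))/eqP ->.
  by rewrite /bvF eqxx /= mulr1 mulrC.
move=> m hm.
have := CKone_ok; rewrite /CKone => /allP/(_ l (mem_allHI l))/allP/(_ m (mem_allHI m))/eqP ->.
by rewrite /bvF (negbTE hm) /= mulr0.
Qed.

Definition intv (u : HI -> int) : cvec k HI := [ffun h => (u h)%:~R].

Lemma ev_Ltr_int (u u' : HI -> int) f :
  ev (Ltr (intv u) f) (intv u') = \sum_m f m * (hmulF u' u m)%:~R.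
Proof.
rewrite /ev.
under eq_bigr => i _ do rewrite !ffunE mulr_suml.
under eq_bigr => i _ do under eq_bigr => l _ do rewrite cDeltaE mulr_sumr mulr_suml.
under eq_bigr => i _ do rewrite exchange_big.
rewrite exchange_big; apply: eq_bigr => m _.
rewrite /hmulF zsumE -sum_allHI mulr_sumr; apply: eq_bigr => i _.
rewrite zsumE -sum_allHI mulr_sumr; apply: eq_bigr => l _.
rewrite !ffunE !rmorphM /=; ring.
Qed.

Lemma ev_Ltr_jv r r' f : (r < 6)%N -> (r' < 6)%N ->
  ev (Ltr (jv r) f) (jv r') = if (4 <= r)%N then 0 else
    (hmulF (Jv r') (Jv r) o011)%:~R * ev f (jv 4) + (hmulF (Jv r') (Jv r) o111)%:~R * ev f (jv 5).
Proof.
move=> hr hr'; rewrite (ev_Ltr_int (Jv r) (Jv r')).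
have hJ := CKJ_ok; move: hJ; rewrite /CKJ => /allP/(_ r); rewrite mem_iota hr => /(_ isT).
move=> /allP/(_ r'); rewrite mem_iota hr' => /(_ isT) /allP hJ.
under eq_bigr => m _ do rewrite (eqP (hJ m (mem_allHI m))).
case: (4 <= r)%N.
  by rewrite big1 // => m _; rewrite mulr0z mulr0.
rewrite /ev !mulr_sumr -big_split; apply: eq_bigr => m _.
rewrite !ffunE rmorphD !rmorphM /=; ring.
Qed.

Lemma R_subcoalg : subcoalg (dualC k) Rsp.
Proof.
apply: subcoalg_span => x /mapP [j _ ->].
case: j => [s|[[m n]|[m n]]].
- by rewrite fm_grouplike //; apply: tens_mem; exact: fm_in_R.
- have := @fm_matrix k io hio false m n; rewrite /= /inlp => ->.
  by apply: memv_suml => r _; apply: tens_mem; exact: fm_in_R.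
- have := @fm_matrix k io hio true m n; rewrite /= /inrp => ->.
  by apply: memv_suml => r _; apply: tens_mem; exact: fm_in_R.
Qed.

Lemma simple_in_R T : simple_subcoalg (dualC k) T -> (T <= Rsp)%VS.
Proof.
case=> Tn0 hT hmin.
have hTR : subcoalg (dualC k) (T :&: Rsp)%VS.
  apply/subcoalgP => v; rewrite memv_cap => /andP [vT vR].
  have [c1 r1] := proj1 (subcoalgP _ _) hT v vT.
  have [c2 r2] := proj1 (subcoalgP _ _) R_subcoalg v vR.
  by split=> l; rewrite memv_cap ?c1 ?c2 ?r1 ?r2.
case: (hmin _ hTR (capvSl T Rsp)) => [h0|hT']; last by rewrite -hT' capvSr.
exfalso.
have key : forall g, g \in T -> g \in Rsp -> g != 0 -> False.
  move=> g gT gR g0; have : g \in (T :&: Rsp)%VS by rewrite memv_cap gT gR.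
  by rewrite h0 memv0 (negbTE g0).
set f := vpick T.
have hfT : f \in T := memv_pick T.
have hf0 : f != 0 by rewrite vpick0.
have useL : forall r, (r < 6)%N -> ev f (jv r) != 0 ->
    (forall r', (r' < 6)%N -> ev (Ltr (jv r) f) (jv r') = 0) -> False.
  move=> r hr hE hJ; apply: (key (Ltr (jv r) f)).
  - exact: Ltr_mem.
  - exact: (R_of_J hio h8).
  - apply/eqP => h; move: hE; rewrite -Ltr_one h.
    have -> : (0 : cvec k HI) oneHI = 0 by rewrite ffunE.
    by rewrite eqxx.
have [E4|E4] := eqVneq (ev f (jv 4)) 0; last first.
  by apply: (useL 4) => // r' hr'; rewrite ev_Ltr_jv.
have [E5|E5] := eqVneq (ev f (jv 5)) 0; last first.
  by apply: (useL 5) => // r' hr'; rewrite ev_Ltr_jv.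
case: (boolP [exists r : 'I_4, ev f (jv r) != 0]) => [/existsP [r hr]|/existsPn hn].
  apply: (useL r) => //; first by apply: (ltn_trans (ltn_ord r)).
  move=> r' hr'; rewrite ev_Ltr_jv //; last by apply: (ltn_trans (ltn_ord r)).
  rewrite leqNgt (leq_trans (ltn_ord r)) //=.
  by rewrite E4 E5 !mulr0 addr0.
apply: (key f) => //; apply: (R_of_J hio h8) => r hr.
move: hr; rewrite ltnS leq_eqVlt => /orP [/eqP ->|]; first exact: E5.
rewrite ltnS leq_eqVlt => /orP [/eqP ->|hr]; first exact: E4.
by have := hn (Ordinal hr); rewrite negbK => /eqP.
Qed.

End Main5.

Section Main6.
Variables (k : fieldType) (io : k).
Hypothesis hio : io ^+ 2 = -1.
Hypothesis h8 : (8%:R : k) != 0.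
Local Notation gI := (gI io).
Local Notation fm := (fm io).
Local Notation dv := (dv io).
Local Notation ev := (@ev k).
Local Notation cD := (cDelta (dualC k)).
Local Notation Rsp := (Rsp io).

Lemma boolRz (b : bool) : ((b%:R : int)%:~R : k) = b%:R.
Proof. by case: b. Qed.

Lemma matC_cdelta (m n : 'I_2) (a b : 'I_2 * 'I_2) :
  cdelta (matC k 2) (m, n) (a, b) =
  ((((a.1 == m) && (a.2 == b.1) && (b.2 == n))%:R : int)%:~R).
Proof.
case: a b => [a1 a2] [b1 b2].
rewrite boolRz /= sum_ffunE (bigD1 a2) //= big1 ?addr0.
  rewrite !ffunE /=.
  rewrite -[(a1, a2) == (m, a2)]/((a1 == m) && (a2 == a2)).
  rewrite -[(b1, b2) == (a2, n)]/((b1 == a2) && (b2 == n)).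
  rewrite eqxx andbT [a2 == b1]eq_sym.
  by case: (a1 == m); case: (b1 == a2); case: (b2 == n); rewrite /= ?mulr1 ?mulr0 ?mul0r.
move=> l hl; rewrite !ffunE /=.
rewrite -[(a1, a2) == (m, l)]/((a1 == m) && (a2 == l)).
by rewrite [a2 == l]eq_sym (negbTE hl) andbF mul0r.
Qed.

Lemma td_E (j : JT) (P : JT * JT) : cdelta (targetC k) j P = (tdZ j P)%:~R.
Proof.
case: P => a b.
case: j => [s|[[m n]|[m n]]]; case: a => [a|[a|a]]; case: b => [b|[b|b]];
  rewrite /targetC /sumC /= !ffunE /sumC_d1 /sumC_d2 /= ?ffunE /sumC_d1 /sumC_d2 /=;
  try exact: matC_cdelta; try by [].
rewrite boolRz.
by case: (a == s); case: (b == s); rewrite /= ?mulr1 ?mulr0 ?mul0r.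
Qed.

Lemma ev_sum (I : Type) (r : seq I) (c : I -> k) (F : I -> cvec k HI) v :
  ev (\sum_(i <- r) c i *: F i) v = \sum_(i <- r) c i * ev (F i) v.
Proof.
elim: r => [|x r IH]; rewrite ?big_nil ?big_cons.
  by rewrite /ev big1 // => i _; rewrite ffunE mul0r.
by rewrite ev_lin IH.
Qed.

Lemma iso_Rsp : coalg_iso_onto (dualC k) Rsp (targetC k).
Proof.
exists fm; split => //.
- apply/freeP => c hc i.
  pose j0 : JT := inl false.
  have hi : forall i0 : 'I_#|(JT : finType)|, (i0 < size (enum (JT : finType)))%N.
    by move=> i0; rewrite -cardE ltn_ord.
  have := congr1 (fun x => ev x (dv (nth j0 (enum (JT : finType)) i))) hc.
  rewrite /= ev_sum (bigD1 i) //= big1 ?addr0.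
    rewrite (nth_map j0); last exact: hi.
    rewrite ev_fm_dv // eqxx /ev big1 => [/eqP|x _]; last by rewrite ffunE mul0r.
    by rewrite mulf_eq0 (negbTE h8) orbF => /eqP.
  move=> i' hi'.
  rewrite (nth_map j0); last exact: hi.
  rewrite ev_fm_dv //.
  rewrite nth_uniq ?enum_uniq //.
  by rewrite (ifN _ _ hi') mulr0.
- move=> j; apply/ffunP => -[p q]; rewrite cDelta_fm_sum //.
  have sE : forall (F : JT * JT -> ctvec k HI) x, (\sum_P F P) x = \sum_P F P x.
    by move=> F x; exact: sum_ffunE.
  rewrite sE.
  symmetry; transitivity (\sum_(a : JT) \sum_(b : JT) (cdelta (targetC k) j (a, b) *: tens (fm a) (fm b)) (p, q)).
    by rewrite pair_bigA; apply: eq_bigr => -[a b].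
  symmetry.
  under eq_bigr => a _ do under eq_bigr => b _ do rewrite !ffunE /= scaleo td_E -(gI_Z io) -!(gI_mul hio).
  under eq_bigr => a _ do rewrite (gI_sumJT io).
  rewrite (gI_sumJT io).
  have := CKiso_ok; rewrite /CKiso => /allP/(_ j (mem_allJT j))/allP/(_ p (mem_allHI p)).
  by move=> /allP/(_ q (mem_allHI q))/eqP ->.
- move=> j; rewrite cEpsE ffunE.
  case: j => [s|[[m n]|[m n]]] /=.
  + by case: s; rewrite /gI; vm_compute fmZ; rewrite mul0r addr0.
  + rewrite (ord2E m) (ord2E n).
    by case: m => [[|[|?]] ?] //; case: n => [[|[|?]] ?] //; rewrite /gI; vm_compute fmZ; rewrite mul0r addr0.
  + rewrite (ord2E m) (ord2E n).
    by case: m => [[|[|?]] ?] //; case: n => [[|[|?]] ?] //; rewrite /gI; vm_compute fmZ; rewrite mul0r addr0.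
Qed.

End Main6.

Definition spF (p q : HI) : seq (int * HI) :=
  [seq (bmulF p q t, t) | t <- [seq t <- allHI | bmulF p q t != 0]].

Definition CKx := all (fun i => spF (ord4 i, false, false) (ord4 0, true, false) == [:: (1, (ord4 i, true, false))]) (iota 0 4).
Definition CKy := all (fun i => spF (ord4 i, false, false) (ord4 0, false, true) == [:: (1, (ord4 i, false, true))]) (iota 0 4).
Definition CKxy := all (fun i => spF (ord4 i, true, false) (ord4 0, false, true) == [:: (1, (ord4 i, true, true))]) (iota 0 4).
Lemma CKx_ok : CKx. Proof. by vm_compute. Qed.
Lemma CKy_ok : CKy. Proof. by vm_compute. Qed.
Lemma CKxy_ok : CKxy. Proof. by vm_compute. Qed.

Section Main7.
Variables (k : fieldType) (io : k).
Hypothesis hio : io ^+ 2 = -1.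
Hypothesis h2 : (2%:R : k) != 0.
Local Notation gI := (gI io).
Local Notation fm := (fm io).
Local Notation cD := (cDelta (dualC k)).

Lemma sparse (g : cvec k HI) p q :
  \sum_i g i * (bmulF p q i)%:~R = \sum_(x <- spF p q) (x.1)%:~R * g x.2.
Proof.
rewrite sum_allHI /spF big_map big_filter [RHS]big_mkcond; apply: eq_bigr => t _ /=.
case: eqP => [->|_]; first by rewrite mulr0z mulr0.
by rewrite mulrC.
Qed.

Lemma gl_eq (g : cvec k HI) : grouplike (dualC k) g ->
  forall p q, g p * g q = \sum_(x <- spF p q) (x.1)%:~R * g x.2.
Proof.
case=> hD _ p q; move/ffunP: hD => /(_ (p, q)).
by rewrite cDeltaE ffunE sparse => <-.
Qed.

Definition oH (n : nat) (a b : bool) : HI := (ord4 n, a, b).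

Lemma phiE s (t : HI) : fm (inl s) t = if t.1.2 || t.2 then 0 else (if s then (-1) ^+ t.1.1 else 1).
Proof.
case: t => [[i a] b]; rewrite ffunE (ord4E i).
case: i => [[|[|[|[|n]]]] Hi] //; case: a; case: b; case: s;
  rewrite /gI; vm_compute fmZ; rewrite /= ?mul0r ?addr0 //.
- by rewrite (_ : (2 %% 4 = 2)%N) // sqrrN expr1n.
- by rewrite (_ : (3 %% 4 = 3)%N) // exprS sqrrN expr1n mulr1 rmorphN1.
Qed.

Lemma intr_m1 : ((-1 : int)%:~R : k) = -1.
Proof. by rewrite rmorphN1. Qed.
Lemma intr_1 : ((1 : int)%:~R : k) = 1.
Proof. by []. Qed.

Lemma gl_char (g : cvec k HI) : grouplike (dualC k) g -> exists s, g = fm (inl s).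
Proof.
move=> hg; have E := gl_eq hg.
have L : forall p q (s : seq (int * HI)), spF p q == s ->
    g p * g q = \sum_(x <- s) (x.1)%:~R * g x.2 by move=> p q s /eqP <-; apply: E.
have g1 : g (ord4 0, false, false) = 1.
  have := hg.2; rewrite cEpsE; rewrite /oneHI.
  by rewrite (_ : ord0 = ord4 0) //; apply: val_inj.
set gam := g (ord4 1, false, false).
have e11 : gam * gam = g (ord4 2, false, false).
  rewrite (L _ _ [:: (1, (ord4 2, false, false))]); last by vm_compute.
  by rewrite big_cons big_nil /= addr0 intr_1 mul1r.
have e12 : gam * g (ord4 2, false, false) = g (ord4 3, false, false).
  rewrite (L _ _ [:: (1, (ord4 3, false, false))]); last by vm_compute.
  by rewrite big_cons big_nil /= addr0 intr_1 mul1r.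
have e13 : gam * g (ord4 3, false, false) = 1.
  rewrite (L _ _ [:: (1, (ord4 0, false, false))]); last by vm_compute.
  by rewrite big_cons big_nil /= addr0 intr_1 mul1r.
have e1x : gam * g (ord4 0, true, false) = g (ord4 1, true, false).
  rewrite (L _ _ [:: (1, (ord4 1, true, false))]); last by vm_compute.
  by rewrite big_cons big_nil /= addr0 intr_1 mul1r.
have ex1 : g (ord4 0, true, false) * gam = - g (ord4 1, true, false).
  rewrite (L _ _ [:: (-1, (ord4 1, true, false))]); last by vm_compute.
  by rewrite big_cons big_nil /= addr0 intr_m1 mulN1r.
have e1y : gam * g (ord4 0, false, true) = g (ord4 1, false, true).
  rewrite (L _ _ [:: (1, (ord4 1, false, true))]); last by vm_compute.
  by rewrite big_cons big_nil /= addr0 intr_1 mul1r.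
have ey1 : g (ord4 0, false, true) * gam = - g (ord4 1, false, true).
  rewrite (L _ _ [:: (-1, (ord4 1, false, true))]); last by vm_compute.
  by rewrite big_cons big_nil /= addr0 intr_m1 mulN1r.
have exx : g (ord4 0, true, false) * g (ord4 0, true, false) = - 1 + g (ord4 2, false, false).
  rewrite (L _ _ [:: (-1, (ord4 0, false, false)); (1, (ord4 2, false, false))]); last by vm_compute.
  by rewrite !big_cons big_nil /= addr0 intr_m1 intr_1 mulN1r mul1r g1.
have hg0 : gam != 0.
  by apply/eqP => h; move: e13; rewrite h mul0r => /eqP; rewrite eq_sym oner_eq0.
have gx : g (ord4 0, true, false) = 0.
  have h : (gam * g (ord4 0, true, false)) *+ 2 = 0.
    by rewrite mulr2n {2}e1x -[g (ord4 1, true, false)]opprK -ex1 mulrC subrr.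
  move/eqP: h; rewrite -mulr_natl mulf_eq0 (negbTE h2) /= mulf_eq0 (negbTE hg0) /=.
  by move/eqP.
have gy : g (ord4 0, false, true) = 0.
  have h : (gam * g (ord4 0, false, true)) *+ 2 = 0.
    by rewrite mulr2n {2}e1y -[g (ord4 1, false, true)]opprK -ey1 mulrC subrr.
  move/eqP: h; rewrite -mulr_natl mulf_eq0 (negbTE h2) /= mulf_eq0 (negbTE hg0) /=.
  by move/eqP.
have g2 : g (ord4 2, false, false) = 1.
  by apply/eqP; rewrite -subr_eq0 addrC -exx gx mul0r.
have g3 : g (ord4 3, false, false) = gam by rewrite -e12 g2 mulr1.
have gg : gam * gam = 1 by rewrite e11 g2.
have go : forall i, (i < 4)%N -> g (ord4 i, false, false) = gam ^+ i.
  case=> [|[|[|[|i]]]] // _.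
  by rewrite g3 exprS expr2 gg mulr1.
have gab : forall i a b, (i < 4)%N -> a || b -> g (ord4 i, a, b) = 0.
  move=> i a b hi hab; have hi' : i \in iota 0 4 by rewrite mem_iota.
  case: a hab; case: b => // _.
  - have := CKxy_ok; rewrite /CKxy => /allP/(_ i hi')/L.
    by rewrite gy mulr0 big_cons big_nil /= addr0 intr_1 mul1r => <-.
  - have := CKx_ok; rewrite /CKx => /allP/(_ i hi')/L.
    by rewrite gx mulr0 big_cons big_nil /= addr0 intr_1 mul1r => <-.
  - have := CKy_ok; rewrite /CKy => /allP/(_ i hi')/L.
    by rewrite gy mulr0 big_cons big_nil /= addr0 intr_1 mul1r => <-.
have [gm|gp] : gam = -1 \/ gam = 1.
  have hq : (gam + 1) * (gam - 1) = gam * gam - 1 by ring.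
  have : (gam + 1) * (gam - 1) = 0 by rewrite hq gg subrr.
  move/eqP; rewrite mulf_eq0 => /orP [|] /eqP h.
    by left; apply/eqP; rewrite -subr_eq0 opprK h.
  by right; apply/eqP; rewrite -subr_eq0 h.
- exists true; apply/ffunP => t; rewrite phiE.
  case: t => [[i a] b] /=; rewrite (ord4E i).
  case: (boolP (a || b)) => hab.
    by rewrite gab.
  move: hab; case: a; case: b => // _; rewrite go ?gm //= modn_small //.
- exists false; apply/ffunP => t; rewrite phiE.
  case: t => [[i a] b] /=; rewrite (ord4E i).
  case: (boolP (a || b)) => hab.
    by rewrite gab.
  move: hab; case: a; case: b => // _; rewrite go ?gp ?expr1n //.
Qed.

End Main7.

Section Main8.
Variables (k : fieldType) (io : k).
Hypothesis hio : io ^+ 2 = -1.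
Local Notation fm := (fm io).
Local Notation cD := (cDelta (dualC k)).

Definition evl (f u : cvec k HI) : k := \sum_i u i * f i.
Definition evT (f g : cvec k HI) (U : ctvec k HI) : k := \sum_P U P * f P.1 * g P.2.

Lemma evT_tens f g u w : evT f g (tens u w) = evl f u * evl g w.
Proof.
rewrite /evT (eq_bigr (fun P => tens u w (P.1, P.2) * f P.1 * g P.2)); last by move=> [a b].
rewrite -(pair_bigA _ (fun a b => tens u w (a, b) * f a * g b)) /evl mulr_suml.
apply: eq_bigr => a _; rewrite mulr_sumr; apply: eq_bigr => b _; rewrite ffunE /=; ring.
Qed.
Lemma evT_add f g U W : evT f g (U + W) = evT f g U + evT f g W.
Proof. by rewrite /evT -big_split; apply: eq_bigr => P _; rewrite ffunE !mulrDl. Qed.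
Lemma evT_Z f g c U : evT f g (c *: U) = c * evT f g U.
Proof. by rewrite /evT mulr_sumr; apply: eq_bigr => P _; rewrite ffunE /= scaleo !mulrA. Qed.
Lemma evT_0 f g : evT f g 0 = 0.
Proof. by rewrite /evT big1 // => P _; rewrite ffunE !mul0r. Qed.
Lemma evT_sum f g (I : Type) (r : seq I) (F : I -> ctvec k HI) :
  evT f g (\sum_(i <- r) F i) = \sum_(i <- r) evT f g (F i).
Proof.
elim: r => [|x r IH]; rewrite ?big_nil ?big_cons ?evT_0 //.
by rewrite evT_add IH.
Qed.

Lemma evl_bvec f t : evl f (bvec k t) = f t.
Proof.
rewrite /evl (bigD1 t) //= big1 ?addr0; first by rewrite ffunE eqxx mul1r.
by move=> i /negbTE hi; rewrite ffunE hi mul0r.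
Qed.

Lemma evT_tmul f g U W :
  (forall a b, evl f (bmul k a b) = f a * f b) ->
  (forall a b, evl g (bmul k a b) = g a * g b) ->
  evT f g (tmul U W) = evT f g U * evT f g W.
Proof.
move=> hf hg; rewrite /tmul.
have sE : forall (F : HI * HI -> ctvec k HI), evT f g (\sum_p F p) = \sum_p evT f g (F p).
  by move=> F; exact: evT_sum.
rewrite sE; under eq_bigr => p _ do rewrite sE.
under eq_bigr => p _ do under eq_bigr => q _ do rewrite evT_Z evT_tens hf hg.
rewrite /evT mulr_suml; apply: eq_bigr => p _; rewrite mulr_sumr; apply: eq_bigr => q _.
ring.
Qed.

Lemma evT_iter f g n A B :
  (forall a b, evl f (bmul k a b) = f a * f b) ->
  (forall a b, evl g (bmul k a b) = g a * g b) ->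
  evT f g (iter n (tmul A) B) = evT f g A ^+ n * evT f g B.
Proof.
move=> hf hg; elim: n => [|n IH]; first by rewrite expr0 mul1r.
by rewrite iterS evT_tmul // IH exprS mulrA.
Qed.

Lemma phi_mult s a b : evl (fm (inl s)) (bmul k a b) = fm (inl s) a * fm (inl s) b.
Proof.
have := fm_grouplike hio s; move/ffunP/(_ (a, b)); rewrite cDeltaE ffunE => <-.
by rewrite /evl; apply: eq_bigr => i _; rewrite bmulE mulrC.
Qed.

Lemma phi_group e s s' : fm (inl (addb s s')) = dualmul e (fm (inl s)) (fm (inl s')).
Proof.
apply/ffunP => -[[i a] b]; rewrite /dualmul [RHS]ffunE.
change (fm (inl (s (+) s')) (i, a, b) = evT (fm (inl s)) (fm (inl s')) (deltaH k e (i, a, b))).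
rewrite /deltaH.
have hf := phi_mult s; have hg := phi_mult s'.
rewrite !evT_tmul // evT_iter // evT_tens /hcpow /hone !evl_bvec !phiE /=.
case: a; case: b; rewrite /= ?evT_add ?evT_tens /hx /hy /hone /hcpow !evl_bvec !phiE /=
  ?mulr0 ?mul0r ?addr0 // ?expr0 ?mulr1.
all: clear hf hg; rewrite ?mulr0 ?mul0r //.
rewrite !if_same mulr1 mulr1.
by case: s; case: s'; rewrite /= ?mulrNN ?mulr1 ?mul1r ?mulN1r ?expr1n.
Qed.

End Main8.

Lemma fm_g_neq0 (k : fieldType) (io : k) s : fm io (inl s) != 0.
Proof.
apply/eqP => /ffunP/(_ (ord0, false, false)); rewrite phiE /= ffunE.
by case: s => /eqP; rewrite ?expr0 oner_eq0.
Qed.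

Theorem mainTheorem13 (k : closedFieldType) (chark : [pchar k] =i pred0)
  (e : 'I_4) (he : (val e == 1)%N || (val e == 3)%N) :
  (exists phi : bool -> cvec k HI,
     [/\ injective phi,
         (forall g, grouplike (dualC k) g <-> exists b, g = phi b) &
         (forall a b, phi (addb a b) = dualmul e (phi a) (phi b))]) /\
  (exists R : {vspace cvec k HI},
     is_coradical (dualC k) R /\ coalg_iso_onto (dualC k) R (targetC k)).
Proof.
have [io hio] : exists io : k, io ^+ 2 = -1.
  have [x hx] := @solve_monicpoly k 2 (fun i => if i == 0%N then -1 else 0) isT.
  exists x; rewrite hx big_ord_recr big_ord_recr big_ord0 /= add0r.
  by rewrite mul0r addr0 expr0 mulr1.
have h2 : (2%:R : k) != 0.
  by have := chark 2; rewrite !inE /= => ->.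
have h8 : (8%:R : k) != 0.
  by rewrite (_ : 8 = 2 * 2 * 2)%N // !natrM !mulf_neq0.
split.
- exists (fun b => fm io (inl b)); split.
  + have hm : (-1 : k) != 1.
      by apply/eqP => h; move: h2; rewrite mulr2n -{1}h addNr eqxx.
    move=> [] [] // /ffunP/(_ (ord4 1, false, false)); rewrite !phiE /= expr1 => /eqP.
      by rewrite (negbTE hm).
    by rewrite eq_sym (negbTE hm).
  + move=> g; split; first exact: gl_char.
    case=> b ->; split; first exact: fm_grouplike.
    by rewrite cEpsE phiE /= expr0; case: b.
  + by move=> a b; apply: phi_group.
- exists (Rsp io); split; last exact: iso_Rsp.
  split.
  + by move=> T hT; apply: simple_in_R hT.
  + move=> R' hR'; apply/span_subvP => x /mapP [j _ ->].
    case: j => [s|[mn|mn]].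
    * apply: (subvP (hR' _ (line_simple (fm_g_neq0 io s) (fm_grouplike hio s)))).
      exact: memv_line.
    * have hs := mat_simple (F := fun ij => fm io (inr (inl ij))) (D := fun ij => dv io (inr (inl ij))) h8.
      have hs' := hs (fun m n => @fm_matrix k io hio false m n).
      have := hs' (fun a b => ev_fm_dv hio (inr (inl a)) (inr (inl b))).
      move=> /hR' /subvP; apply; apply: memv_span.
      exact: (map_f (fun ij => fm io (inr (inl ij))) (mem_allI2 mn)).
    * have hs := mat_simple (F := fun ij => fm io (inr (inr ij))) (D := fun ij => dv io (inr (inr ij))) h8.
      have hs' := hs (fun m n => @fm_matrix k io hio true m n).
      have := hs' (fun a b => ev_fm_dv hio (inr (inr a)) (inr (inr b))).
      move=> /hR' /subvP; apply; apply: memv_span.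
      exact: (map_f (fun ij => fm io (inr (inr ij))) (mem_allI2 mn)).
Qed.
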